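(* Let $\phi:L_r(\mathbb{C}h)\to\mathbb{C}$ be a linear function and let $L_\phi$ be the unique irreducible quotient $L_r(\mathfrak{sl}_2)$-module of $U(\phi)$. Then $L_\phi$ is an integrable $L_r(\mathfrak{sl}_2)$-module if and only if $\dim L_\phi<\infty$.
   Context: Let $\{e,f,h\}$ be the standard basis of $\mathfrak{sl}_2$, $L_r=\mathbb{C}[t_1^{\pm1},\dots,t_r^{\pm1}]$ ($r\ge1$), and for a subspace $\mathfrak{a}\subset\mathfrak{sl}_2$ let $L_r(\mathfrak{a})=\mathfrak{a}\otimes L_r$; $L_r(\mathfrak{sl}_2)$ has bracket $[u\otimes p,v\otimes q]=[u,v]\otimes pq$. Given a linear $\phi:L_r(\mathbb{C}h)\to\mathbb{C}$, let $\mathbb{C}_\phi=\mathbb{C}$ be the one-dimensional $L_r(\mathbb{C}e\oplus\mathbb{C}h)$-module with $(h\otimes\mathbf{t}^{\mathbf{m}})\cdot1=\phi(h\otimes\mathbf{t}^{\mathbf{m}})1$, $(e\otimes\mathbf{t}^{\mathbf{m}})\cdot1=0$, and $U(\phi)=U(L_r(\mathfrak{sl}_2))\otimes_{U(L_r(\mathbb{C}e\oplus\mathbb{C}h))}\mathbb{C}_\phi$; it has a unique maximal submodule, and $L_\phi$ is the quotient. An $L_r(\mathfrak{sl}_2)$-module is integrable if $h$ acts semisimply and $e\otimes p$, $f\otimes p$ act locally nilpotently for all $p\in L_r$. *)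

(* Defs.v *)
From HB Require Import structures.
From mathcomp Require Import all_boot all_order all_algebra.
From mathcomp Require Import complex.
From mathcomp Require Import reals.
Set Implicit Arguments. Unset Strict Implicit. Unset Printing Implicit Defensive.
Import Order.TTheory GRing.Theory Num.Theory.
Local Open Scope ring_scope.

(* Monomials t^m of L_r = C[t_1^{±1},...,t_r^{±1}] are indexed by m : 'rV[int]_r.
   A basis of L_r(sl2) is { x ⊗ t^m | x ∈ {e,f,h}, m ∈ Z^r }.
   An L_r(sl2)-module structure on a C-vector space V is given by the linear
   operators E m, F m, H m (the actions of e⊗t^m, f⊗t^m, h⊗t^m), subject to the
   bracket relations of L_r(sl2) ([h,e]=2e, [h,f]=-2f, [e,f]=h). *)

Section LoopSl2.
Variables (R : realType) (r : nat) (V : lmodType R[i]).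

Definition op_comm (A B : V -> V) (v : V) : V := A (B v) - B (A v).

Definition op_linear (A : V -> V) : Prop :=
  forall (a : R[i]) (u w : V), A (a *: u + w) = a *: A u + A w.

Definition is_loop_sl2_module (E F H : 'rV[int]_r -> V -> V) : Prop :=
  (forall m, op_linear (E m)) /\ (forall m, op_linear (F m)) /\
  (forall m, op_linear (H m)) /\
  (forall m n v, op_comm (E m) (F n) v = H (m + n) v) /\
  (forall m n v, op_comm (H m) (E n) v = 2%:R *: E (m + n) v) /\
  (forall m n v, op_comm (H m) (F n) v = - (2%:R *: F (m + n) v)) /\
  (forall m n v, op_comm (E m) (E n) v = 0) /\
  (forall m n v, op_comm (F m) (F n) v = 0) /\
  (forall m n v, op_comm (H m) (H n) v = 0).

(* A Laurent polynomial p = \sum_{(c,m) in s} c t^m is given by a finite list s;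
   act A s is the action of x ⊗ p when A m is the action of x ⊗ t^m. *)
Definition act (A : 'rV[int]_r -> V -> V) (s : seq (R[i] * 'rV[int]_r)) (v : V) : V :=
  \sum_(cm <- s) cm.1 *: A cm.2 v.

Definition is_submodule (E F H : 'rV[int]_r -> V -> V) (P : V -> Prop) : Prop :=
  [/\ P 0, (forall u w, P u -> P w -> P (u + w)),
      (forall (a : R[i]) u, P u -> P (a *: u)) &
      (forall m u, P u -> [/\ P (E m u), P (F m u) & P (H m u)])].

Definition is_irreducible (E F H : 'rV[int]_r -> V -> V) : Prop :=
  (exists v : V, v != 0) /\
  forall P, is_submodule E F H P -> (forall v, P v -> v = 0) \/ (forall v, P v).

(* highest weight vector of weight phi : the linear functional on L_r(Ch)
   determined by its values phi m = phi(h ⊗ t^m) on the basis *)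
Definition is_hw_vector (E H : 'rV[int]_r -> V -> V) (phi : 'rV[int]_r -> R[i])
  (v : V) : Prop :=
  v != 0 /\ forall m, E m v = 0 /\ H m v = phi m *: v.

Definition locally_nilpotent (A : V -> V) : Prop :=
  forall v, exists n : nat, iter n A v = 0.

(* h = h ⊗ 1 acts semisimply: V is spanned by eigenvectors of H 0 *)
Definition acts_semisimply (A : V -> V) : Prop :=
  forall v, exists s : seq (R[i] * V),
    v = \sum_(x <- s) x.2 /\ all (fun x => A x.2 == x.1 *: x.2) s.

Definition is_integrable (E F H : 'rV[int]_r -> V -> V) : Prop :=
  [/\ acts_semisimply (H 0),
      (forall s, locally_nilpotent (act E s)) &
      (forall s, locally_nilpotent (act F s))].

Definition finite_dim : Prop :=
  exists s : seq V, forall v, exists c : 'I_(size s) -> R[i],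
    v = \sum_(i < size s) c i *: s`_i.

End LoopSl2.

(* Main.v *)
Require Import Defs.
From HB Require Import structures.
From mathcomp Require Import all_boot all_order all_algebra.
From mathcomp Require Import complex.
From mathcomp Require Import reals.
From mathcomp Require Import ring zify.
Import Order.TTheory GRing.Theory Num.Theory.
Local Open Scope ring_scope.
Set Implicit Arguments. Unset Strict Implicit. Unset Printing Implicit Defensive.

Section Gen.
Variables (R : realType) (V : lmodType R[i]).
Local Notation C := R[i].

Definition spanP (P : V -> Prop) (x : V) : Prop :=
  exists s : seq (C * V), (forall e, e \in s -> P e.2) /\ x = \sum_(e <- s) e.1 *: e.2.

Lemma span0 P : spanP P 0.
Proof. by exists [::]; split => //; rewrite big_nil. Qed.

Lemma span_in P x : P x -> spanP P x.
Proof.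
move=> Px; exists [:: (1, x)]; split; first by move=> e; rewrite inE => /eqP ->.
by rewrite big_cons big_nil scale1r addr0.
Qed.

Lemma spanD P x y : spanP P x -> spanP P y -> spanP P (x + y).
Proof.
move=> [s [Hs ->]] [t [Ht ->]]; exists (s ++ t); split; last by rewrite big_cat.
by move=> e; rewrite mem_cat => /orP [] ?; [apply: Hs|apply: Ht].
Qed.

Lemma spanZ P a x : spanP P x -> spanP P (a *: x).
Proof.
move=> [s [Hs ->]]; exists [seq (a * e.1, e.2) | e <- s]; split.
  by move=> e /mapP [f fs ->] /=; apply: Hs.
rewrite big_map scaler_sumr; apply: eq_bigr => e _; by rewrite scalerA.
Qed.

Lemma spanN P x : spanP P x -> spanP P (- x).
Proof. by move=> /(@spanZ P (-1)); rewrite scaleN1r. Qed.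

Lemma spanB P x y : spanP P x -> spanP P y -> spanP P (x - y).
Proof. by move=> ? ?; apply: spanD => //; apply: spanN. Qed.

Lemma span_sum P (I : eqType) (s : seq I) (f : I -> V) :
  (forall i, i \in s -> spanP P (f i)) -> spanP P (\sum_(i <- s) f i).
Proof.
elim: s => [|a s IH] H; first by rewrite big_nil; apply: span0.
rewrite big_cons; apply: spanD; first by apply: H; rewrite inE eqxx.
by apply: IH => i Hi; apply: H; rewrite inE Hi orbT.
Qed.

Lemma span_sum_ord P n (f : 'I_n -> V) :
  (forall i, spanP P (f i)) -> spanP P (\sum_(i < n) f i).
Proof. by move=> H; apply: span_sum => i _; apply: H. Qed.

Lemma span_trans P Q x : (forall y, P y -> spanP Q y) -> spanP P x -> spanP Q x.
Proof.
move=> H [s [Hs ->]]; apply: span_sum => e es; apply: spanZ; exact: H (Hs _ es).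
Qed.

Lemma span_mono P Q x : (forall y, P y -> Q y) -> spanP P x -> spanP Q x.
Proof. by move=> H; apply: span_trans => y /H; apply: span_in. Qed.

Lemma linD {A : V -> V} : op_linear A -> forall x y, A (x + y) = A x + A y.
Proof. by move=> HA x y; have := HA 1 x y; rewrite !scale1r. Qed.

Lemma lin0 {A : V -> V} : op_linear A -> A 0 = 0.
Proof.
move=> HA; have H := linD HA 0 0; rewrite addr0 in H.
by rewrite -{1}[A 0]addr0 in H; move/addrI: H.
Qed.

Lemma linZ {A : V -> V} : op_linear A -> forall a x, A (a *: x) = a *: A x.
Proof. by move=> HA a x; have := HA a x 0; rewrite !addr0 lin0 // addr0. Qed.

Lemma linN {A : V -> V} : op_linear A -> forall x, A (- x) = - A x.
Proof. by move=> HA x; rewrite -scaleN1r linZ // scaleN1r. Qed.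

Lemma linB {A : V -> V} : op_linear A -> forall x y, A (x - y) = A x - A y.
Proof. by move=> HA x y; rewrite linD // linN. Qed.

Lemma lin_sum {A : V -> V} (I : Type) (s : seq I) (f : I -> V) :
  op_linear A -> A (\sum_(i <- s) f i) = \sum_(i <- s) A (f i).
Proof.
move=> HA; elim: s => [|a s IH]; first by rewrite !big_nil lin0.
by rewrite !big_cons linD // IH.
Qed.

Lemma span_lin (A : V -> V) P Q x : op_linear A -> (forall y, P y -> spanP Q (A y)) ->
  spanP P x -> spanP Q (A x).
Proof.
move=> HA H [s [Hs ->]]; rewrite lin_sum //; apply: span_sum => e es.
rewrite linZ //; apply: spanZ; exact: H (Hs _ es).
Qed.

Lemma iter_lin (A : V -> V) n : op_linear A -> op_linear (iter n A).
Proof.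
move=> HA; elim: n => [|n IH] a u w //=.
by rewrite IH HA.
Qed.

Lemma comp_lin (A B : V -> V) : op_linear A -> op_linear B -> op_linear (fun x => A (B x)).
Proof. by move=> HA HB a u w; rewrite (HB a u w) (HA a (B u) (B w)). Qed.

Lemma span_nil (A : V -> V) P x : op_linear A -> (forall y, P y -> exists n, iter n A y = 0) ->
  spanP P x -> exists n, iter n A x = 0.
Proof.
move=> HA H [s [Hs ->]]; elim: s Hs => [|e s IH] Hs.
  by exists 0%N; rewrite big_nil.
have [n1 Hn1] := H _ (Hs e (mem_head _ _)).
have [n2 Hn2] : exists n, iter n A (\sum_(e <- s) e.1 *: e.2) = 0.
  by apply: IH => f fs; apply: Hs; rewrite inE fs orbT.
exists (n2 + n1)%N; rewrite big_cons linD; last exact: iter_lin.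
rewrite linZ; last exact: iter_lin.
rewrite iterD Hn1 lin0; last exact: iter_lin.
rewrite scaler0 add0r addnC iterD Hn2 lin0 //; exact: iter_lin.
Qed.

End Gen.

Section Conv.
Variables (R : realType) (V : lmodType R[i]).
Local Notation C := R[i].

Lemma span_list (t : seq V) x : spanP (fun y => y \in t) x ->
  exists c : 'I_(size t) -> C, x = \sum_(i < size t) c i *: t`_i.
Proof.
move=> [s [Hs ->]]; elim: s Hs => [|e s IH] Hs.
  by exists (fun _ => 0); rewrite big_nil big1 // => i _; rewrite scale0r.
have [c Hc] : exists c : 'I_(size t) -> C,
    \sum_(e <- s) e.1 *: e.2 = \sum_(i < size t) c i *: t`_i.
  by apply: IH => f fs; apply: Hs; rewrite inE fs orbT.
have et := Hs e (mem_head _ _).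
have Hk : (index e.2 t < size t)%N by rewrite index_mem.
exists (fun i : 'I_(size t) => (if (i : nat) == index e.2 t then e.1 else 0) + c i).
rewrite big_cons Hc.
transitivity (\sum_(i < size t) ((if (i : nat) == index e.2 t then e.1 else 0) *: t`_i
   + c i *: t`_i)); last by apply: eq_bigr => i _; rewrite scalerDl.
rewrite big_split /=; congr (_ + _).
rewrite (bigD1 (Ordinal Hk)) //= eqxx nth_index // big1 ?addr0 // => i /negbTE.
by rewrite -val_eqE /= => ->; rewrite scale0r.
Qed.
End Conv.

Section Mod.
Variables (R : realType) (r : nat) (V : lmodType R[i]).
Local Notation C := R[i].
Local Notation mode := 'rV[int]_r.
Variables (E F H : mode -> V -> V) (phi : mode -> C) (v : V).
Hypotheses (lE : forall m, op_linear (E m)) (lF : forall m, op_linear (F m))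
  (lH : forall m, op_linear (H m))
  (cEF : forall m n x, op_comm (E m) (F n) x = H (m + n) x)
  (cHF : forall m n x, op_comm (H m) (F n) x = - (2%:R *: F (m + n) x))
  (cFF : forall m n x, op_comm (F m) (F n) x = 0)
  (Ev : forall m, E m v = 0) (Hv : forall m, H m v = phi m *: v).

Lemma HF m n x : H m (F n x) = F n (H m x) - 2%:R *: F (m + n) x.
Proof. by rewrite -(cHF m n x) /op_comm addrC subrK. Qed.

Lemma EF m n x : E m (F n x) = H (m + n) x + F n (E m x).
Proof. by rewrite -(cEF m n x) /op_comm subrK. Qed.

Lemma FF m n x : F m (F n x) = F n (F m x).
Proof. by apply/eqP; rewrite -subr_eq0; apply/eqP; exact: cFF. Qed.

Definition wordon (x : V) (l : seq mode) := foldr (fun m y => F m y) x l.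
Definition word l := wordon v l.
Definition Wk k (y : V) := exists l, size l = k /\ y = word l.
Definition Wall (y : V) := exists l, y = word l.

Lemma wordon_lin l : op_linear (fun x => wordon x l).
Proof.
elim: l => [|m l IH] a u w //=; by rewrite IH (lF m).
Qed.

Lemma F_Wk m k x : spanP (Wk k) x -> spanP (Wk k.+1) (F m x).
Proof.
apply: span_lin => // y [l [Hl ->]]; apply: span_in; exists (m :: l); by rewrite /= Hl.
Qed.

Lemma H_word a l : spanP (Wk (size l)) (H a (word l)).
Proof.
elim: l => [|m l IH] /=.
  by rewrite /word /= Hv; apply: spanZ; apply: span_in; exists [::].
rewrite HF; apply: spanB; first exact: F_Wk.
apply: spanZ; apply: span_in; by exists (a + m :: l).
Qed.

Lemma E_word a l : spanP (Wk (size l).-1) (E a (word l)).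
Proof.
elim: l => [|m l IH] /=.
  by rewrite /word /= Ev; apply: span0.
rewrite EF; apply: spanD; first exact: H_word.
case: l IH => [|m' l] IH.
  by rewrite /word /= Ev lin0 //; apply: span0.
exact: F_Wk.
Qed.

Lemma words_span (hv0 : v != 0) : is_irreducible E F H -> forall x, spanP Wall x.
Proof.
move=> [_ Hirr].
have sub : is_submodule E F H (spanP Wall).
  split; [exact: span0 | move=> ? ?; exact: spanD | move=> ? ?; exact: spanZ|].
  move=> m u Pu; split.
  - apply: span_lin Pu => // y [l ->]; apply: span_mono (E_word m l).
    by move=> z [l' [_ ->]]; exists l'.
  - apply: span_lin Pu => // y [l ->]; apply: span_in; by exists (m :: l).
  - apply: span_lin Pu => // y [l ->]; apply: span_mono (H_word m l).
    by move=> z [l' [_ ->]]; exists l'.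
case: (Hirr _ sub) => [H0|//].
have : v = 0 by apply: H0; apply: span_in; exists [::].
by move/eqP; rewrite (negbTE hv0).
Qed.

Lemma span_zero (P : V -> Prop) x : (forall y, P y -> y = 0) -> spanP P x -> x = 0.
Proof.
move=> H0 [s [Hs ->]]; rewrite big_seq big1 // => e es; by rewrite (H0 _ (Hs _ es)) scaler0.
Qed.

Lemma act_lin (G : mode -> V -> V) s : (forall m, op_linear (G m)) -> op_linear (act G s).
Proof.
move=> lG a u w; rewrite /act scaler_sumr -big_split; apply: eq_bigr => cm _ /=.
by rewrite (lG cm.2) scalerDr !scalerA mulrC.
Qed.

Lemma act_span (G : mode -> V -> V) s (Q : V -> Prop) y :
  (forall m, spanP Q (G m y)) -> spanP Q (act G s y).
Proof. by move=> HG; apply: span_sum => cm _; apply: spanZ. Qed.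

Definition mu (k : nat) : C := phi 0 - 2%:R * k%:R.

Lemma H0_word l : H 0 (word l) = mu (size l) *: word l.
Proof.
elim: l => [|m l IH]; first by rewrite /word /= Hv /mu mulr0 subr0.
rewrite /word /= HF -/(word l) IH add0r (linZ (lF m)) -scalerBl; congr (_ *: _).
by rewrite /mu /= -[(size l).+1]/(1 + size l)%N natrD; ring.
Qed.

Lemma semisimple (hv0 : v != 0) : is_irreducible E F H -> acts_semisimply (H 0).
Proof.
move=> irr x; have [s [Hs ->]] := words_span hv0 irr x.
elim: s Hs => [|e s IH] Hs; first by exists [::]; rewrite !big_nil.
rewrite big_cons.
have [s' [-> Hs']] : exists s' : seq (C * V), \sum_(e <- s) e.1 *: e.2 = \sum_(x <- s') x.2 /\
   all (fun x => H 0 x.2 == x.1 *: x.2) s'.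
  by apply: IH => f fs; apply: Hs; rewrite inE fs orbT.
have [l El] := Hs e (mem_head _ _).
exists ((mu (size l), e.1 *: e.2) :: s'); split; first by rewrite big_cons.
rewrite /= Hs' andbT El (linZ (lH 0)) H0_word !scalerA mulrC //.
Qed.

Lemma E_nilWk s k y : spanP (Wk k) y -> iter k.+1 (act E s) y = 0.
Proof.
elim: k y => [|k IH] y Hy.
  apply: (span_zero (P := fun z => z = 0)) => //.
  apply: span_lin Hy; first exact: act_lin.
  move=> z [l [/size0nil -> ->]]; apply: act_span => m; rewrite /word /wordon /= Ev.
  by apply: span_in.
rewrite iterSr; apply: IH; apply: span_lin Hy; first exact: act_lin.
move=> z [l [Hl ->]]; apply: act_span => m; rewrite -[k]/(k.+1.-1) -Hl.
exact: E_word.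
Qed.

Lemma E_nil (hv0 : v != 0) : is_irreducible E F H ->
  forall s, locally_nilpotent (act E s).
Proof.
move=> irr s x; apply: span_nil (words_span hv0 irr x); first exact: act_lin.
move=> y [l ->]; exists (size l).+1; apply: E_nilWk; apply: span_in; by exists l.
Qed.

Definition WKs (Ks : seq nat) (y : V) := exists l, size l \in Ks /\ y = word l.

Lemma Wall_WKs x : spanP Wall x -> exists Ks, spanP (WKs Ks) x.
Proof.
move=> [s [Hs ->]]; elim: s Hs => [|e s IH] Hs.
  by exists [::]; rewrite big_nil; apply: span0.
have [Ks HK] : exists Ks, spanP (WKs Ks) (\sum_(e <- s) e.1 *: e.2).
  by apply: IH => f fs; apply: Hs; rewrite inE fs orbT.
have [l El] := Hs e (mem_head _ _).
exists (size l :: Ks); rewrite big_cons; apply: spanD.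
  by apply: spanZ; apply: span_in; exists l; rewrite inE eqxx.
apply: span_mono HK => y [l' [Hl' ->]]; exists l'; by rewrite inE Hl' orbT.
Qed.

Lemma list_WKs (hv0 : v != 0) : is_irreducible E F H -> forall t : seq V,
  exists Ks, forall y, y \in t -> spanP (WKs Ks) y.
Proof.
move=> irr; elim => [|y0 t [Ks HK]]; first by exists [::].
have [Ks0 HK0] := Wall_WKs (words_span hv0 irr y0).
exists (Ks0 ++ Ks) => y; rewrite inE => /orP [/eqP ->|yt].
  by apply: span_mono HK0 => z [l [Hl ->]]; exists l; rewrite mem_cat Hl.
by apply: span_mono (HK _ yt) => z [l [Hl ->]]; exists l; rewrite mem_cat Hl orbT.
Qed.

Definition Qop (Ks : seq nat) : V -> V :=
  foldr (fun j f => fun x => H 0 (f x) - mu j *: f x) id Ks.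

Lemma Qop_lin Ks : op_linear (Qop Ks).
Proof.
elim: Ks => [|j Ks IH] a u w //=.
rewrite IH (lH 0) scalerDr scalerBr !scalerA (mulrC (mu j)) opprD addrACA //.
Qed.

Lemma Qop_word Ks l : Qop Ks (word l) = (\prod_(j <- Ks) (mu (size l) - mu j)) *: word l.
Proof.
elim: Ks => [|j Ks IH]; first by rewrite big_nil scale1r.
rewrite /= IH (linZ (lH 0)) H0_word big_cons !scalerA -scalerBl; congr (_ *: _).
by ring.
Qed.

Lemma mu_neq j k : j <> k -> mu k - mu j != 0.
Proof.
move=> jk; have h2 : (2%:R : C) != 0 by rewrite pnatr_eq0.
rewrite subr_eq0 /mu; apply/eqP => /addrI /oppr_inj /(mulfI h2) /eqP.
by rewrite eqr_nat => /eqP ?; apply: jk.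
Qed.

Lemma words_vanish (hv0 : v != 0) : is_irreducible E F H -> finite_dim V ->
  exists K, forall l, (K < size l)%N -> word l = 0.
Proof.
move=> irr [t Ht]; have [Ks HK] := list_WKs hv0 irr t.
exists (\max_(j <- Ks) j) => l Hl.
have Hnot : size l \notin Ks.
  apply/negP => Hin; have := leq_bigmax_seq (P := predT) (F := fun j => j) _ Hin isT.
  by rewrite leqNgt Hl.
have Q0 : Qop Ks (word l) = 0.
  have [c ->] := Ht (word l).
  apply: (span_zero (P := fun z => z = 0)) => //.
  apply: span_lin (Qop_lin Ks) _ _; last first.
    apply: span_sum_ord => i; apply: spanZ; apply: HK; apply: mem_nth.
    by case: i.
  move=> y [l' [Hl' ->]]; apply: span_in; rewrite Qop_word (big_rem _ Hl') /=.
  by rewrite subrr mul0r scale0r.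
move: Q0; rewrite Qop_word => /eqP; rewrite scaler_eq0 => /orP [|/eqP //].
have Hp : \prod_(j <- Ks) (mu (size l) - mu j) != 0.
  rewrite prodf_seq_neq0; apply/allP => j jK /=; apply: mu_neq => jl.
  by move: Hnot; rewrite -jl jK.
by rewrite (negbTE Hp).
Qed.

Lemma F_iter s n k y : spanP (Wk k) y -> spanP (Wk (k + n)) (iter n (act F s) y).
Proof.
elim: n => [|n IH] Hy; first by rewrite addn0.
rewrite addnS /=; apply: span_lin (IH Hy); first exact: act_lin.
move=> z Hz; apply: act_span => m; apply: F_Wk; exact: span_in.
Qed.

Lemma F_nil (hv0 : v != 0) : is_irreducible E F H -> finite_dim V ->
  forall s, locally_nilpotent (act F s).
Proof.
move=> irr fd s x; have [K HK] := words_vanish hv0 irr fd.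
apply: span_nil (words_span hv0 irr x); first exact: act_lin.
move=> y [l ->]; exists K.+1.
have Hw : spanP (Wk (size l)) (word l) by apply: span_in; exists l.
have := F_iter s K.+1 Hw.
apply: span_zero => z [l' [Hl' ->]]; apply: HK; rewrite Hl'; apply: leq_trans (leq_addl _ _).
by [].
Qed.

Section Key.
Variable d : mode.
Definition md (k : nat) : mode := d *+ k.
Definition wd (w : seq nat) := word (map md w).
Definition ev (s : seq (C * seq nat)) := \sum_(e <- s) e.1 *: wd e.2.

Fixpoint hform (a : nat) (w : seq nat) : seq (C * seq nat) :=
  if w is k :: w' then (- 2%:R, (a + k)%N :: w') :: [seq (e.1, k :: e.2) | e <- hform a w']
  else [:: (phi (md a), [::])].

Fixpoint eform (w : seq nat) : seq (C * seq nat) :=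
  if w is k :: w' then hform k.+1 w' ++ [seq (e.1, k :: e.2) | e <- eform w'] else [::].

Definition Eform (s : seq (C * seq nat)) : seq (C * seq nat) :=
  flatten [seq [seq (e.1 * f.1, f.2) | f <- eform e.2] | e <- s].

Lemma ev_cat s t : ev (s ++ t) = ev s + ev t.
Proof. by rewrite /ev big_cat. Qed.

Lemma ev_cons k s : ev [seq (e.1, k :: e.2) | e <- s] = F (md k) (ev s).
Proof.
rewrite /ev big_map (lin_sum _ _ (lF _)); apply: eq_bigr => e _.
by rewrite (linZ (lF _)).
Qed.

Lemma ev_scale c s : ev [seq (c * f.1, f.2) | f <- s] = c *: ev s.
Proof.
rewrite /ev big_map scaler_sumr; apply: eq_bigr => e _; by rewrite scalerA.
Qed.

Lemma wd_cons k w : wd (k :: w) = F (md k) (wd w).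
Proof. by []. Qed.

Lemma ev_hform a w : ev (hform a w) = H (md a) (wd w).
Proof.
elim: w => [|k w IH].
  by rewrite /ev /= big_cons big_nil addr0 /wd /word /wordon /= Hv.
rewrite /= /ev big_cons -/(ev _) ev_cons IH wd_cons HF /md -mulrnDr -/(md _).
by rewrite /= scaleNr addrC.
Qed.

Lemma ev_eform w : ev (eform w) = E d (wd w).
Proof.
elim: w => [|k w IH].
  by rewrite /ev /= big_nil /wd /word /wordon /= Ev.
rewrite /= ev_cat ev_hform ev_cons IH wd_cons EF /md -mulrS //.
Qed.

Lemma ev_Eform s : ev (Eform s) = E d (ev s).
Proof.
elim: s => [|e s IH]; first by rewrite /ev /= !big_nil lin0.
rewrite /Eform /= ev_cat -/(Eform s) IH ev_scale ev_eform /ev big_cons -/(ev s).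
by rewrite (linD (lE d)) (linZ (lE d)).
Qed.

Definition posc k (c : C) := exists N, (0 < N)%N /\ c = (- 2%:R) ^+ k * N%:R.

Definition Inv k L (s : seq (C * seq nat)) :=
  (forall e, e \in s -> [/\ size e.2 = L, (sumn e.2 <= k)%N & (sumn e.2 = k -> posc k e.1)])
  /\ (exists2 e, e \in s & sumn e.2 = k).

Lemma hform_prop a w f : f \in hform a w -> size f.2 = size w /\
  (sumn f.2 = sumn w \/ (sumn f.2 = (a + sumn w)%N /\ f.1 = - 2%:R)).
Proof.
elim: w f => [|k w IH] f /=.
  by rewrite inE => /eqP -> /=; split => //; left.
rewrite inE => /orP [/eqP -> /=|/mapP [g gh ->] /=].
  by split => //; right; split => //; rewrite addnA.
have [-> [->|[-> ->]]] := IH g gh; split => //; first by left.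
by right; split => //; rewrite addnCA.
Qed.

Lemma hform_top a w : w != [::] -> exists2 f, f \in hform a w & sumn f.2 = (a + sumn w)%N.
Proof.
case: w => [//|k w] _; exists (- 2%:R, (a + k)%N :: w); first by rewrite inE eqxx.
by rewrite /= addnA.
Qed.

Lemma eform_prop w f : f \in eform w -> [/\ size f.2 = (size w).-1,
  (sumn f.2 <= (sumn w).+1)%N & (sumn f.2 = (sumn w).+1 -> f.1 = - 2%:R)].
Proof.
elim: w f => [//|k w IH] f /=; rewrite mem_cat => /orP [fh|/mapP [g ge ->] /=].
  have [-> [->|[-> ->]]] := hform_prop fh; split => //;
    first [lia | move=> ?; exfalso; lia | done].
case: w IH ge => [//|k' w] IH ge.
have [Hs Hle Htop] := IH g ge; rewrite /= in Hs Hle Htop *; split.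
- by rewrite /= Hs.
- lia.
- move=> Hg; apply: Htop; lia.
Qed.

Lemma eform_top w : (1 < size w)%N -> exists2 f, f \in eform w & sumn f.2 = (sumn w).+1.
Proof.
case: w => [//|k [//|k' w]] _.
have [f fh Hf] := hform_top k.+1 (w := k' :: w) isT.
exists f; last by rewrite Hf.
by have -> : eform [:: k, k' & w] = hform k.+1 (k' :: w) ++ [seq (e.1, k :: e.2) | e <- eform (k' :: w)] by []; rewrite mem_cat fh.
Qed.

Lemma Eform_mem s f' : f' \in Eform s ->
  exists e f, [/\ e \in s, f \in eform e.2 & f' = (e.1 * f.1, f.2)].
Proof.
elim: s => [//|e s IH]; rewrite /Eform /= mem_cat -/(Eform s) => /orP [|/IH].
  by move=> /mapP [f fe ->]; exists e, f; rewrite inE eqxx.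
by move=> [e' [f [e's H1 H2]]]; exists e', f; rewrite inE e's orbT.
Qed.

Lemma Eform_memI s e f : e \in s -> f \in eform e.2 -> (e.1 * f.1, f.2) \in Eform s.
Proof.
elim: s => [//|e' s IH]; rewrite inE /Eform /= mem_cat -/(Eform s).
move=> /orP [/eqP <- fe|es fe]; last by rewrite IH ?orbT.
by rewrite (map_f (fun f => (e.1 * f.1, f.2)) fe).
Qed.

Lemma Eform_inv k L s : Inv k L.+1 s -> (0 < L)%N -> Inv k.+1 L (Eform s).
Proof.
move=> [Hall [e0 e0s He0]] L0; split.
  move=> f' /Eform_mem [e [f [es fe ->]]] /=.
  have [Hse Hle Htop] := Hall e es.
  have [Hsf Hlf Htf] := eform_prop fe.
  split; first by rewrite Hsf Hse.
    by apply: leq_trans Hlf _.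
  move=> Hk.
  have Hek : sumn e.2 = k.
    apply/eqP; rewrite eqn_leq Hle /= -ltnS -Hk; exact: Hlf.
  have [N [N0 ->]] := Htop Hek; exists N; split => //.
  by rewrite Htf ?Hk ?Hek // exprSr mulrAC.
have [f fe Hf] : exists2 f, f \in eform e0.2 & sumn f.2 = (sumn e0.2).+1.
  by apply: eform_top; have [-> _ _] := Hall e0 e0s.
by exists (e0.1 * f.1, f.2); [exact: Eform_memI | rewrite /= Hf He0].
Qed.

Definition Tgt n (y : V) := exists i, (i < n)%N /\ y = F (md i) v.

Lemma fin_aux n s : (forall e, e \in s -> [/\ size e.2 = 1%N, (sumn e.2 <= n)%N &
    (sumn e.2 = n -> posc n e.1)]) ->
  exists N : nat, ((exists2 e, e \in s & sumn e.2 = n) -> (0 < N)%N) /\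
    spanP (Tgt n) (ev s - ((- 2%:R) ^+ n * N%:R) *: F (md n) v).
Proof.
elim: s => [|e s IH] Hs.
  exists 0%N; split; first by case.
  by rewrite /ev big_nil mulr0 scale0r subr0; apply: span0.
have [N' [HN' Hsp]] : exists N : nat, ((exists2 e, e \in s & sumn e.2 = n) -> (0 < N)%N) /\
    spanP (Tgt n) (ev s - ((- 2%:R) ^+ n * N%:R) *: F (md n) v).
  by apply: IH => f fs; apply: Hs; rewrite inE fs orbT.
have [Hse Hle Htop] := Hs e (mem_head _ _); clear Hs.
case: e Hse Hle Htop => c [//|x [|//]] _ /= Hle Htop.
rewrite addn0 in Hle Htop.
rewrite /ev big_cons -/(ev s) /=.
have -> : wd [:: x] = F (md x) v by [].
case: (eqVneq x n) => [Exn|Nxn].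
  have [Ne [Ne0 Hc]] := Htop Exn.
  exists (Ne + N')%N; split; first by rewrite addn_gt0 Ne0.
  have AC : forall A B C : V, A + B - (A + C) = B - C.
    by move=> A B C; rewrite opprD addrACA subrr add0r.
  by rewrite Exn Hc natrD mulrDr scalerDl AC.
exists N'; split.
  move=> [f]; rewrite inE => /orP [/eqP -> /=|fs Hf]; first by rewrite addn0 => Exn; rewrite Exn eqxx in Nxn.
  by apply: HN'; exists f.
rewrite -addrA; apply: spanD => //; apply: spanZ; apply: span_in; exists x; split => //.
by rewrite ltn_neqAle Nxn Hle.
Qed.

Lemma sumn_nseq0 n : sumn (nseq n 0%N) = 0%N.
Proof. by elim: n. Qed.

Lemma iter_Eform_inv n i : (i <= n)%N ->
  Inv i (n - i).+1 (iter i Eform [:: (1, nseq n.+1 0%N)]).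
Proof.
elim: i => [|i IH] Hi.
  rewrite subn0; split; last by exists (1, nseq n.+1 0%N); rewrite ?inE ?sumn_nseq0.
  move=> e; rewrite inE => /eqP -> /=; rewrite size_nseq sumn_nseq0; split => // _.
  by exists 1%N; rewrite expr0 mul1r.
have Hi' : (i <= n)%N by apply: ltnW.
rewrite iterS; apply: Eform_inv => //.
have -> : (n - i.+1).+2 = (n - i).+1 by lia.
exact: IH.
Qed.

Lemma ev_iter i s : ev (iter i Eform s) = iter i (E d) (ev s).
Proof. by elim: i => //= i IH; rewrite ev_Eform IH. Qed.

Lemma key n : iter n.+1 (F 0) v = 0 -> spanP (Tgt n) (F (md n) v).
Proof.
move=> Hnil.
have [Hall [e0 e0s He0]] := iter_Eform_inv (leqnn n); rewrite subnn in Hall.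
set s := iter n Eform _ in Hall e0s.
have Hev : ev s = 0.
  have -> : ev s = iter n (E d) (ev [:: (1, nseq n.+1 0%N)]).
    by rewrite /s ev_iter.
  have -> : ev [:: (1, nseq n.+1 0%N)] = 0.
    rewrite /ev big_cons big_nil addr0 scale1r -[RHS]Hnil /wd map_nseq.
    have -> : md 0 = 0 by rewrite /md mulr0n.
    by rewrite /word /wordon; elim: n.+1 => //= j ->.
  exact: lin0 (iter_lin _ (lE d)).
have [N [HN Hsp]] := fin_aux Hall.
have N0 : (0 < N)%N by apply: HN; exists e0.
move: Hsp; rewrite Hev sub0r => /spanN; rewrite opprK.
set c := (_ * _); have c0 : c != 0.
  rewrite mulf_neq0 // ?pnatr_eq0 -?lt0n // expf_neq0 // oppr_eq0 pnatr_eq0 //.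
move=> /(spanZ c^-1); by rewrite scalerA mulVf // scale1r.
Qed.

End Key.

Lemma transl a (Pc : mode -> Prop) b :
  spanP (fun y => exists c, Pc c /\ y = F c v) (F b v) ->
  spanP (fun y => exists c, Pc c /\ y = F (a + c) v) (F (a + b) v).
Proof.
move=> Hb.
pose G x := phi a *: x - H a x.
have lG : op_linear G.
  move=> c u w; rewrite /G (lH a) scalerDr !scalerA mulrC scalerBr scalerA.
  by rewrite opprD addrACA.
have GF c : G (F c v) = 2%:R *: F (a + c) v.
  by rewrite /G HF Hv (linZ (lF c)) opprB addrC subrK.
have h2 : (2%:R : C) != 0 by rewrite pnatr_eq0.
have -> : F (a + b) v = 2%:R^-1 *: G (F b v) by rewrite GF scalerA mulVf // scale1r.
apply: spanZ; apply: span_lin Hb => // y [c [Pc_ ->]]; rewrite GF; apply: spanZ.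
by apply: span_in; exists c.
Qed.

Definition ej (j : 'I_r) : mode := delta_mx ord0 j.
Definition meas (m : mode) : nat := \sum_(j < r) absz (m ord0 j).
Definition inbox n (m : mode) : bool := [forall j, (absz (m ord0 j) < n)%N].

Lemma meas_lt (m a : mode) j : (forall k, k != j -> a ord0 k = m ord0 k) ->
  (absz (a ord0 j) < absz (m ord0 j))%N -> (meas a < meas m)%N.
Proof.
move=> Hk Hj; rewrite /meas (bigD1 j) //= [X in (_ < X)%N](bigD1 j) //=.
rewrite (eq_bigr (fun k => absz (m ord0 k))); last by move=> k /Hk ->.
by rewrite ltn_add2r.
Qed.

Lemma ej_entry j k : ej j ord0 k = (k == j)%:R.
Proof. by rewrite /ej mxE eqxx. Qed.

Lemma reduce_step n m : (forall d, spanP (Tgt d n) (F (md d n) v)) -> ~~ inbox n m ->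
  spanP (fun y => exists c, (meas c < meas m)%N /\ y = F c v) (F m v).
Proof.
move=> Hkey; rewrite /inbox negb_forall => /existsP [j]; rewrite -leqNgt => Hj.
have [d Hd0 Hdj] : exists2 d : mode, (forall k, k != j -> d ord0 k = 0) &
       d ord0 j = (if (0 <= m ord0 j)%R then 1 else -1).
  exists (if (0 <= m ord0 j)%R then ej j else - ej j) => [k kj|];
  case: ifP => _; rewrite /ej ?mxE /= ?eqxx ?(negbTE kj) ?oppr0 //.
pose a := m - d *+ n.
have Em : m = a + d *+ n by rewrite /a subrK.
rewrite [in F m v]Em.
apply: span_trans (transl a (Pc := fun c => exists i, (i < n)%N /\ c = d *+ i) _); last first.
  by apply: span_mono (Hkey d) => y [i [Hi ->]]; exists (d *+ i); split => //; exists i.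
move=> y [c [[i [Hi ->]] ->]]; apply: span_in; exists (a + d *+ i); split => //.
have Hent k : (a + d *+ i) ord0 k = m ord0 k - d ord0 k *+ n + d ord0 k *+ i
  by rewrite !mxE !mulmxnE.
apply: (@meas_lt m _ j) => [k kj|]; first by rewrite Hent Hd0 // !mul0rn subr0 addr0.
rewrite Hent Hdj; case: ifP => Hs; rewrite ?mulNrn -?pmulrn; lia.
Qed.

Lemma reduce n : (forall d, spanP (Tgt d n) (F (md d n) v)) ->
  forall m, spanP (fun y => exists c, inbox n c /\ y = F c v) (F m v).
Proof.
move=> Hkey m; move: {2}(meas m) (leqnn (meas m)) => B; elim: B m => [|B IH] m Hm.
  case Hb: (inbox n m); first by apply: span_in; exists m.
  apply: span_trans (reduce_step Hkey (negbT Hb)) => y [c [Hc ->]].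
  by move: Hc; rewrite leqn0 in Hm; rewrite (eqP Hm).
case Hb: (inbox n m); first by apply: span_in; exists m.
apply: span_trans (reduce_step Hkey (negbT Hb)) => y [c [Hc ->]].
by apply: IH; rewrite -ltnS; apply: leq_trans Hc _.
Qed.

Lemma Fiter_comm a c k x : F a (iter k (F c) x) = iter k (F c) (F a x).
Proof. by elim: k => //= k <-; rewrite FF. Qed.

Lemma wordon_iter c k x l : iter k (F c) (wordon x l) = wordon (iter k (F c) x) l.
Proof. by elim: l => //= m l <-; rewrite Fiter_comm. Qed.

Lemma word_decomp c l :
  word l = iter (count_mem c l) (F c) (word (filter (predC1 c) l)).
Proof.
elim: l => [//|a l IH].
rewrite [word (a :: l)]/word /= -/(word l) IH.
case: (eqVneq a c) => [->|ac] /=; rewrite add0n //.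
by rewrite Fiter_comm.
Qed.

Lemma Tspan (Fnil : forall c, exists N, iter N (F c) v = 0) (S : seq mode) :
  exists Ls : seq (seq mode), forall l, all (fun x => x \in S) l ->
    spanP (fun y => exists l', l' \in Ls /\ y = word l') (word l).
Proof.
elim: S => [|c S [Ls HLs]].
  exists [:: [::]] => l; case: l => [_|//]; apply: span_in; exists [::].
  by rewrite inE eqxx.
have [N HN] := Fnil c.
exists [seq l' ++ nseq k c | l' <- Ls, k <- iota 0 N] => l Hl.
rewrite (word_decomp c l).
have Hf : all (fun x => x \in S) (filter (predC1 c) l).
  rewrite all_filter; apply/allP => x xl; apply/implyP => /= xc.
  by move/allP: Hl => /(_ x xl); rewrite inE (negbTE xc).
apply: span_lin (HLs _ Hf); first exact: iter_lin.
move=> y [l' [l'L ->]]; rewrite /word wordon_iter.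
case: (ltnP (count_mem c l) N) => HK.
  apply: span_in; exists (l' ++ nseq (count_mem c l) c); split.
    by apply: allpairs_f => //; rewrite mem_iota.
  rewrite /word /wordon foldr_cat; congr foldr.
  by elim: (count_mem c l) => //= k ->.
rewrite -(subnK HK) iterD HN lin0; last exact: iter_lin.
rewrite (lin0 (wordon_lin l')); exact: span0.
Qed.

Lemma absz_shift (x : int) n : (absz x < n)%N -> (absz (x + n%:Z)%R < 2 * n)%N.
Proof. lia. Qed.

Lemma absz_shift2 (x : int) n : (absz x < n)%N -> (absz (x + n%:Z))%:Z - n%:Z = x.
Proof. lia. Qed.

Definition Bl n : seq mode :=
  [seq \row_(k < r) ((f k : nat)%:Z - n%:Z) | f : {ffun 'I_r -> 'I_(2 * n)}].

Lemma inbox_Bl n c : inbox n c -> c \in Bl n.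
Proof.
move=> /forallP Hc.
have pf k : (absz (c ord0 k + n%:Z)%R < 2 * n)%N by apply: absz_shift; exact: Hc.
pose f := [ffun k => Ordinal (pf k)].
have -> : c = \row_(k < r) ((f k : nat)%:Z - n%:Z).
  by apply/rowP => k; rewrite !mxE ffunE /= absz_shift2 //; exact: Hc.
by apply/imageP; exists f.
Qed.


Lemma main_fwd (hv0 : v != 0) : is_irreducible E F H -> is_integrable E F H -> finite_dim V.
Proof.
move=> irr [_ _ HFn].
have Fnil c : exists N, iter N (F c) v = 0.
  have [N HN] := HFn [:: (1, c)] v; exists N; rewrite -HN; apply: eq_iter => x.
  by rewrite /act big_cons big_nil addr0 scale1r.
have [N0 HN0] := Fnil 0.
case: N0 HN0 => [/= Hv0|n Hn]; first by rewrite Hv0 eqxx in hv0.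
have Hred m : spanP (fun y => exists c, c \in Bl n /\ y = F c v) (F m v).
  have Hk : forall d, spanP (Tgt d n) (F (md d n) v) by move=> d; exact: key.
  have Hr := @reduce n Hk m.
  apply: span_mono Hr => y [c [Hc ->]].
  by exists c; split => //; apply: inbox_Bl.
have [Ls HLs] := Tspan Fnil (Bl n).
have Hbox l : spanP (fun y => exists l', all (fun c => c \in Bl n) l' /\ y = word l') (word l).
  elim: l => [|m l IH]; first by apply: span_in; exists [::].
  apply: span_lin IH => // y [l' [Hl' ->]].
  have -> : F m (word l') = wordon (F m v) l' by rewrite /word -(wordon_iter m 1).
  apply: (span_lin (A := fun x => wordon x l') (wordon_lin l') _ (Hred m)).
  move=> z [c [Hc ->]]; apply: span_in; exists (l' ++ [:: c]); split.
    by rewrite all_cat Hl' /= Hc.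
  by rewrite /word /wordon foldr_cat.
exists (map word Ls) => x; apply: span_list.
apply: span_trans (words_span hv0 irr x) => y [l ->].
apply: span_trans (Hbox l) => z [l' [Hl' ->]].
apply: span_mono (HLs l' Hl') => w [l'' [Hl'' ->]].
exact: map_f.
Qed.

Lemma main_bwd (hv0 : v != 0) : is_irreducible E F H -> finite_dim V -> is_integrable E F H.
Proof.
move=> irr fd; split; [exact: semisimple | exact: E_nil | exact: F_nil].
Qed.

End Mod.


Theorem proposition5p3 (R : realType) (r : nat) (hr : (0 < r)%N)
  (phi : 'rV[int]_r -> R[i]) (V : lmodType R[i])
  (E F H : 'rV[int]_r -> V -> V) :
  is_loop_sl2_module E F H ->
  is_irreducible E F H ->
  (exists v : V, is_hw_vector E H phi v) ->
  (is_integrable E F H <-> finite_dim V).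
Proof.
move=> [lE [lF [lH [cEF [cHE [cHF [cEE [cFF cHH]]]]]]]] irr [v [hv0 Hvv]].
have Ev m : E m v = 0 by have [] := Hvv m.
have Hv m : H m v = phi m *: v by have [] := Hvv m.
split.
  by apply: main_fwd.
by apply: main_bwd.
Qed.
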